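(* Let $k\ge2$, $\ell\ge1$, and start with $k^\ell$ labeled chips on the root of the infinite rooted directed $k$-ary tree. Consider any stable configuration reached by labeled chip-firing. Let $v$ be any vertex on a layer $t$ with $1\le t\le \ell+1$, and let $S$ be the set of chips which, in the stable configuration, lie in the subtree rooted at $v$. Then the smallest chip of $S$ lies on the bottom straight left descendant of $v$ and the largest chip of $S$ lies on the bottom straight right descendant of $v$.
   Context: The infinite rooted directed $k$-ary tree: every vertex has $k$ children ordered left to right, edges directed from parent to child; the root is on layer $1$, children of a layer-$t$ vertex are on layer $t+1$. Labeled chip-firing: a vertex with at least $k$ chips may fire by choosing any $k$ of its chips and sending the $i$-th smallest label among them to its $i$-th leftmost child; a configuration is stable when no vertex has $\ge k$ chips. With $k^\ell$ chips initially at the root, every stable configuration has exactly one chip on each vertex of layer $\ell+1$ and no other chips. The bottom straight left (resp. right) descendant of a vertex $v$ on layer $t\le \ell+1$ is the unique vertex on layer $\ell+1$ reached from $v$ by repeatedly moving to the leftmost (resp. rightmost) child (it is $v$ itself if $t=\ell+1$). *)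

(* Defs.v *)
From mathcomp Require Import all_boot.
Set Implicit Arguments. Unset Strict Implicit. Unset Printing Implicit Defensive.

(* Vertices of the infinite rooted k-ary tree: the root is [::]; the i-th
   leftmost child (i = 0, ..., k-1) of v is rcons v i.  A vertex v lies on
   layer (size v).+1.  Edges go from v to rcons v i. *)
Definition vertex := seq nat.

Definition child (v : vertex) (i : nat) : vertex := rcons v i.

Definition layer (v : vertex) : nat := (size v).+1.

Definition is_vertex (k : nat) (v : vertex) : bool := all (fun i => i < k) v.

Definition in_subtree (v w : vertex) : bool := prefix v w.

(* Labeled chips: N chips labeled by 'I_N (labels ordered as naturals).
   A configuration records the vertex where each chip lies. *)
Definition config (N : nat) := 'I_N -> vertex.

Definition chips_at N (c : config N) (v : vertex) : {set 'I_N} :=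
  [set x | c x == v].

(* rank of chip x among the chips of A: number of chips of A with a
   smaller label (0-based); so the i-th smallest (1-based) goes to the
   i-th leftmost child. *)
Definition rank N (A : {set 'I_N}) (x : 'I_N) : nat :=
  #|[set y in A | (y < x)%N]|.

Definition fire N (c : config N) (v : vertex) (A : {set 'I_N}) : config N :=
  fun x => if x \in A then child v (rank A x) else c x.

Definition fire_step (k N : nat) (c c' : config N) : Prop :=
  exists v (A : {set 'I_N}),
    [/\ #|A| = k, A \subset chips_at c v & c' = fire c v A].

Inductive reachable (k N : nat) (c0 : config N) : config N -> Prop :=
| reach_refl : reachable k c0 c0
| reach_step c c' : reachable k c0 c -> fire_step k c c' -> reachable k c0 c'.

Definition stable (k N : nat) (c : config N) : Prop :=
  forall v : vertex, #|chips_at c v| < k.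

Definition root_config N : config N := fun _ => [::].

Definition bottom_left (l : nat) (v : vertex) : vertex :=
  v ++ nseq (l.+1 - layer v) 0.
Definition bottom_right (k l : nat) (v : vertex) : vertex :=
  v ++ nseq (l.+1 - layer v) k.-1.

(* Main.v *)
Require Import Defs.
From mathcomp Require Import all_boot.
From mathcomp Require Import zify.
Set Implicit Arguments. Unset Strict Implicit. Unset Printing Implicit Defensive.

Lemma prefix_rcons_eq (s t : seq nat) a :
  prefix s (rcons t a) = prefix s t || (s == rcons t a).
Proof.
elim: t s => [|y t IH] [|x s] //=.
by rewrite IH eqseq_cons andb_orr.
Qed.

Lemma prefix_size_eq (s t : seq nat) : prefix s t -> size t <= size s -> s = t.
Proof.
move=> /prefixP[r ->]; rewrite size_cat => h.
have -> : r = [::] by case: r h => //= ? ?; lia.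
by rewrite cats0.
Qed.

Lemma prefix_rcons2 (v : seq nat) i r : prefix (rcons v i) (rcons v r) = (i == r).
Proof.
apply/idP/eqP => [h|->]; last exact: prefix_refl.
have := prefix_size_eq h; rewrite !size_rcons leqnn => /(_ isT) /eqP.
by rewrite eqseq_rcons eqxx => /eqP.
Qed.

Section Chips.
Variable N : nat.
Implicit Types (c : config N) (A : {set 'I_N}).

Lemma rank_lt A x : x \in A -> rank A x < #|A|.
Proof.
move=> xA; rewrite /rank.
have sub : [set y in A | (y < x)%N] \subset A :\ x.
  apply/subsetP => y; rewrite !inE => /andP[yA yx]; rewrite yA andbT.
  by apply/eqP => e; move: yx; rewrite e ltnn.
apply: (leq_ltn_trans (subset_leq_card sub)).
by rewrite (cardsD1 x A) xA add1n ltnSn.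
Qed.

Lemma rank_mono A x y : x \in A -> y \in A -> (x < y)%N -> rank A x < rank A y.
Proof.
move=> xA yA xy; rewrite /rank; apply: proper_card; apply/properP; split.
  apply/subsetP => z; rewrite !inE => /andP[-> zx] /=; exact: ltn_trans zx xy.
exists x; first by rewrite inE xA.
by rewrite inE ltnn andbF.
Qed.

Lemma rank_inj A x y : x \in A -> y \in A -> rank A x = rank A y -> x = y.
Proof.
move=> xA yA e; apply/val_inj/eqP; case: (ltngtP x y) => // h.
  by have := rank_mono xA yA h; rewrite e ltnn.
by have := rank_mono yA xA h; rewrite e ltnn.
Qed.

Lemma rank_count A k i : #|A| = k -> i < k -> \sum_(z in A) (rank A z == i) = 1.
Proof.
case: k => [//|k] cA ik.
pose g (z : 'I_N) : 'I_k.+1 := inord (rank A z).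
have gv z : z \in A -> (g z : nat) = rank A z.
  by move=> zA; rewrite /g inordK // -cA; apply: rank_lt.
have ginj : {in A &, injective g}.
  by move=> x y xA yA e; apply: (rank_inj xA yA); rewrite -(gv x xA) -(gv y yA) e.
have : g @: A = [set: 'I_k.+1].
  apply/eqP; rewrite eqEcard subsetT /= cardsT card_ord card_in_imset //.
  by rewrite cA.
move=> im.
have : Ordinal ik \in g @: A by rewrite im inE.
case/imsetP => z zA ez.
rewrite (bigD1 z) //= big1.
  by rewrite -(gv z zA) -ez eqxx.
move=> y /andP[yA yz]; apply/eqP; rewrite eqb0; apply/eqP => ey.
move/eqP: yz; apply; apply: (rank_inj yA zA).
by rewrite ey -(gv z zA) -ez.
Qed.


Definition valid_inv k c := forall x, is_vertex k (c x).
Definition fcount c (w : vertex) := \sum_(x : 'I_N) (prefix w (c x) : nat).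
Definition eq_inv k c := forall u i j, i < k -> j < k ->
  fcount c (rcons u i) = fcount c (rcons u j).
Definition ext_inv (b : nat) (cmp : rel nat) c := forall (u : vertex) x,
  prefix u (c x) -> exists y : 'I_N, cmp y x /\ ((c y == u) || prefix (rcons u b) (c y)).

Lemma fire_in c v A x : x \in A -> fire c v A x = rcons v (rank A x).
Proof. by rewrite /fire => ->. Qed.
Lemma fire_out c v A x : x \notin A -> fire c v A x = c x.
Proof. by rewrite /fire => /negbTE ->. Qed.

Lemma sub_at c v A x : A \subset chips_at c v -> x \in A -> c x = v.
Proof. by move=> /subsetP h /h; rewrite inE => /eqP. Qed.

Lemma valid_fire k c v A : valid_inv k c -> #|A| = k -> A \subset chips_at c v ->
  valid_inv k (fire c v A).
Proof.
move=> hv cA sA x; case: (boolP (x \in A)) => xA; last by rewrite fire_out.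
rewrite fire_in // /is_vertex all_rcons -cA rank_lt //=.
by rewrite cA -(sub_at sA xA); exact: (hv x).
Qed.

Lemma fcount_fire c v A w : A \subset chips_at c v ->
  fcount (fire c v A) w = \sum_(x in A) (prefix w (rcons v (rank A x)) : nat)
     + \sum_(x | x \notin A) (prefix w (c x) : nat) /\
  fcount c w = \sum_(x in A) (prefix w v : nat)
     + \sum_(x | x \notin A) (prefix w (c x) : nat).
Proof.
move=> sA; split; rewrite /fcount {1}(bigID (fun x => x \in A)) /=; congr (_ + _).
- by apply: eq_bigr => x xA; rewrite fire_in.
- by apply: eq_bigr => x xA; rewrite fire_out.
- by apply: eq_bigr => x xA; rewrite (sub_at sA xA).
Qed.

Lemma eq_fire k c v A : eq_inv k c -> #|A| = k -> A \subset chips_at c v ->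
  eq_inv k (fire c v A).
Proof.
move=> he cA sA u i j ik jk.
have := he u i j ik jk.
have [e1i e2i] := fcount_fire (rcons u i) sA.
have [e1j e2j] := fcount_fire (rcons u j) sA.
rewrite e2i e2j e1i e1j.
case: (eqVneq u v) => [->|nuv].
  have pv t : prefix (rcons v t) v = false.
    by apply/negbTE/negP => /size_prefix; rewrite size_rcons ltnn.
  have z0 : \sum_(x in A) (false : nat) = 0 by apply: big1.
  rewrite !pv z0 !add0n => ->.
  congr (_ + _).
  rewrite (eq_bigr (fun z => (rank A z == i) : nat)); last first.
    by move=> z _; rewrite prefix_rcons2 eq_sym.
  rewrite (rank_count cA ik).
  rewrite (eq_bigr (fun z => (rank A z == j) : nat)); last first.
    by move=> z _; rewrite prefix_rcons2 eq_sym.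
  by rewrite (rank_count cA jk).
have pr t r : prefix (rcons u t) (rcons v r) = prefix (rcons u t) v.
  rewrite prefix_rcons_eq eqseq_rcons.
  by rewrite (negbTE nuv) andFb orbF.
have st t : \sum_(x in A) (prefix (rcons u t) (rcons v (rank A x)) : nat)
   = \sum_(x in A) (prefix (rcons u t) v : nat).
  by apply: eq_bigr => z _; rewrite pr.
by rewrite !st.
Qed.
Lemma ext_fire b (cmp : rel nat) c v A :
  reflexive cmp -> transitive cmp ->
  (exists2 y0, y0 \in A & rank A y0 = b /\ forall z, z \in A -> cmp y0 z) ->
  ext_inv b cmp c -> A \subset chips_at c v -> ext_inv b cmp (fire c v A).
Proof.
move=> crefl ctr [y0 y0A [ry0 my0]] hi sA u x.
have yA_case : forall y : 'I_N, u != v -> y \in A ->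
    (c y == u) || prefix (rcons u b) (c y) ->
    (fire c v A y == u) || prefix (rcons u b) (fire c v A y).
  move=> y nuv yA; rewrite (sub_at sA yA) fire_in // eq_sym (negbTE nuv) /=.
  by move=> h; apply/orP; right; exact: (prefix_trans h (prefix_rcons _ _)).
case: (eqVneq u v) => [->|nuv].
  move=> hx; have : prefix v (c x).
    case: (boolP (x \in A)) => xA; first by rewrite (sub_at sA xA) prefix_refl.
    by rewrite -(fire_out c v xA).
  case/hi => y [cyx Qy].
  case: (boolP (y \in A)) => yA.
    exists y0; split; first exact: ctr (my0 _ yA) cyx.
    by rewrite fire_in // ry0 prefix_refl orbT.
  by exists y; rewrite fire_out.
case: (boolP (x \in A)) => xA.
  rewrite fire_in // prefix_rcons_eq => /orP[pu|/eqP eu].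
    have : prefix u (c x) by rewrite (sub_at sA xA).
    case/hi => y [cyx Qy]; exists y; split => //.
    case: (boolP (y \in A)) => yA; first exact: yA_case.
    by rewrite fire_out.
  by exists x; split => //; rewrite fire_in // eu eqxx.
rewrite fire_out // => /hi [y [cyx Qy]]; exists y; split => //.
case: (boolP (y \in A)) => yA; first exact: yA_case.
by rewrite fire_out.
Qed.

Lemma min_ex A k : #|A| = k -> 0 < k ->
  exists2 y0, y0 \in A & rank A y0 = 0 /\ forall z, z \in A -> leq y0 z.
Proof.
move=> cA k0; have : 0 < #|A| by rewrite cA.
case/card_gt0P => x0 x0A.
case: (arg_minnP (fun x : 'I_N => val x) x0A) => y0 y0A my0.
exists y0 => //; split => //.
apply/eqP; rewrite /rank cards_eq0; apply/eqP/setP => y; rewrite !inE.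
by case yA: (y \in A) => //=; rewrite ltnNge my0.
Qed.

Lemma max_ex A k : #|A| = k -> 0 < k ->
  exists2 y0, y0 \in A & rank A y0 = k.-1 /\ forall z, z \in A -> geq y0 z.
Proof.
move=> cA k0; have : 0 < #|A| by rewrite cA.
case/card_gt0P => x0 x0A.
case: (arg_maxnP (fun x : 'I_N => val x) x0A) => y0 y0A my0.
exists y0 => //; split => //.
rewrite /rank; have -> : [set y in A | (y < y0)%N] = A :\ y0.
  apply/setP => y; rewrite !inE; case yA: (y \in A); rewrite ?andbF ?andbT //=.
  have := my0 y yA; rewrite /= leq_eqVlt; case/orP => [/eqP e|hlt].
    by rewrite e ltnn; apply/esym/negbTE; rewrite negbK; apply/eqP/val_inj.
  by rewrite hlt; apply/esym/eqP => e; move: hlt; rewrite e ltnn.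
have y0A2 : y0 \in A := y0A.
by move: (cardsD1 y0 A); rewrite y0A2 cA add1n => ->.
Qed.

Lemma inv_reach k c : 0 < k -> reachable k (@root_config N) c ->
  [/\ valid_inv k c, eq_inv k c, ext_inv 0 leq c & ext_inv k.-1 geq c].
Proof.
move=> k0; elim => [|c1 c2 _ [hv he hl hr] [v [A [cA sA ->]]]].
  split.
  - by [].
  - move=> u i j _ _.
    have z t : fcount (@root_config N) (rcons u t) = 0.
      by apply: big1 => x _; case: u.
    by rewrite !z.
  - move=> u x; rewrite /root_config prefixs0 => /eqP ->.
    by exists x; split; [exact: leqnn | rewrite eqxx].
  - move=> u x; rewrite /root_config prefixs0 => /eqP ->.
    by exists x; split; [exact: leqnn | rewrite eqxx].
split.
- exact: valid_fire.
- exact: eq_fire.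
- exact: (ext_fire leqnn leq_trans (min_ex cA k0) hl sA).
- have gr : reflexive geq by move=> n; exact: leqnn.
  have gt : transitive geq by move=> y x z h1 h2; exact: leq_trans h2 h1.
  exact: (ext_fire gr gt (max_ex cA k0) hr sA).
Qed.

Lemma pt k u w : is_vertex k w ->
  (prefix u w : nat) = (w == u) + \sum_(i < k) (prefix (rcons u i) w : nat).
Proof.
move=> vw; case: (boolP (prefix u w)) => h.
  case/prefixP: h vw => [[|a s] ->].
    rewrite cats0 eqxx big1 // => i _.
    by have -> : prefix (rcons u i) u = false by
      apply/negbTE/negP => /size_prefix; rewrite size_rcons ltnn.
  rewrite /is_vertex all_cat /= => /and3P[_ ak _].
  have -> : (u ++ a :: s == u) = false.
    by apply/negbTE/eqP => /(congr1 size); rewrite size_cat /= -[RHS]addn0 => /eqP; rewrite eqn_add2l.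
  rewrite (bigD1 (Ordinal ak)) //= -cats1 prefix_catr // eqxx /= eqxx big1 ?prefix0s //.
  move=> i ni.
  rewrite -cats1 prefix_catr // eqxx /=.
  by case: eqP => // e; move: ni; rewrite -val_eqE /= e eqxx.
have -> : (w == u) = false.
  by apply/negbTE/eqP => e; move: h; rewrite e prefix_refl.
rewrite big1 // => i _.
case: (boolP (prefix (rcons u i) w)) => // h2.
by move: h; rewrite (prefix_trans (prefix_rcons u i) h2).
Qed.

Lemma card_at c u : #|chips_at c u| = \sum_(x : 'I_N) (c x == u : nat).
Proof.
rewrite -sum1_card big_mkcond /=; apply: eq_bigr => x _.
by rewrite inE; case: (c x == u).
Qed.

Lemma decomp k c u : valid_inv k c -> eq_inv k c -> 0 < k ->
  fcount c u = #|chips_at c u| + k * fcount c (rcons u 0).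
Proof.
move=> hv he k0.
have -> : k * fcount c (rcons u 0) = \sum_(i < k) fcount c (rcons u i).
  rewrite (eq_bigr (fun _ => fcount c (rcons u 0))); last first.
    by move=> i _; apply: he.
  by rewrite big_const_ord iter_addn_0 mulnC.
rewrite card_at /fcount exchange_big -big_split /=.
by apply: eq_bigr => x _; apply: pt.
Qed.

Lemma arith k a x y : a < k -> a + k * x = k * y -> a = 0 /\ x = y.
Proof.
move=> ak e.
have xy : x <= y.
  rewrite leqNgt; apply/negP => h.
  have : k * y < k * x by rewrite ltn_mul2l h andbT; case: k ak {e}.
  lia.
have : y <= x.
  rewrite leqNgt; apply/negP => h.
  have : k * x.+1 <= k * y by rewrite leq_mul2l h orbT.
  rewrite mulnS; lia.
move=> yx; have exy : x = y by apply/eqP; rewrite eqn_leq xy yx.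
by subst; split => //; lia.
Qed.


Section Final.
Variables (k l : nat) (c : config N).
Hypotheses (hk : 1 < k) (hN : N = k ^ l) (hv : valid_inv k c) (he : eq_inv k c)
  (hs : stable k c).

Lemma step_lem u : size u < l -> fcount c u = k ^ (l - size u) ->
  #|chips_at c u| = 0 /\ fcount c (rcons u 0) = k ^ (l - (size u).+1).
Proof.
move=> lu fu.
have k0 : 0 < k by apply: ltnW.
have := decomp u hv he k0; rewrite fu.
have -> : l - size u = (l - (size u).+1).+1 by lia.
rewrite expnS => e; apply: (arith (hs u)); exact/esym.
Qed.

Lemma fcount_val w : is_vertex k w -> size w <= l -> fcount c w = k ^ (l - size w).
Proof.
elim/last_ind: w => [|u i IH].
  move=> _ _; rewrite /fcount subn0 -hN.
  under eq_bigr => x _ do rewrite prefix0s.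
  by rewrite big_const_ord iter_addn_0 mul1n.
rewrite /is_vertex all_rcons size_rcons => /andP[ik vu] lu.
have [_ f0] := step_lem lu (IH vu (ltnW lu)).
by rewrite (he u ik (ltnW hk)) f0.
Qed.

Lemma no_chip u x : is_vertex k u -> size u < l -> c x != u.
Proof.
move=> vu lu.
have [h _] := step_lem lu (fcount_val vu (ltnW lu)).
apply/eqP => e; move/eqP: h; rewrite cards_eq0 => /eqP h.
have : x \in chips_at c u by rewrite inE e.
by rewrite h inE.
Qed.

Lemma size_le x : size (c x) <= l.
Proof.
rewrite leqNgt; apply/negP => lt.
set u := take l (c x); set i := nth 0 (c x) l.
have vx := hv x.
have vu : is_vertex k u.
  by move: vx; rewrite /is_vertex -{1}(cat_take_drop l (c x)) all_cat => /andP[].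
have ik : i < k by apply: (allP vx); rewrite mem_nth.
have su : size u = l by rewrite size_take lt.
have f1 : fcount c u = 1 by rewrite (fcount_val vu) su ?subnn // su.
have k0 : 0 < k by apply: ltnW.
have := decomp u hv he k0; rewrite f1 => e.
have f0 : fcount c (rcons u 0) = 0.
  move: e; case: (fcount c (rcons u 0)) => // n; rewrite mulnS; lia.
have := @he u i 0 ik k0; rewrite f0 /fcount (bigD1 x) //=.
by rewrite /u /i -take_nth // prefix_take.
Qed.

Lemma rcons_nseq j (b : nat) : rcons (nseq j b) b = nseq j.+1 b.
Proof. by elim: j => //= j ->. Qed.

Lemma descend v b (cmp : rel nat) (m : 'I_N) : b < k -> ext_inv b cmp c ->
  antisymmetric cmp -> is_vertex k v -> size v <= l -> prefix v (c m) ->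
  (forall y : 'I_N, prefix v (c y) -> cmp m y) -> c m = v ++ nseq (l - size v) b.
Proof.
move=> bk hext anti vv lv pm hmin.
suff H : forall j, j <= l - size v -> prefix (v ++ nseq j b) (c m).
  apply/esym/prefix_size_eq; first exact: H.
  by rewrite size_cat size_nseq; have := size_le m; lia.
elim => [|j IH] hj; first by rewrite cats0.
have := IH (ltnW hj); set u := v ++ nseq j b => pu.
case: (hext u m pu) => y [cym /orP[/eqP cyu| py]].
  have vu : is_vertex k u by rewrite /is_vertex all_cat; apply/andP; split; [exact: vv | rewrite all_nseq bk orbT].
  have lu : size u < l by rewrite size_cat size_nseq; lia.
  by move: (no_chip y vu lu); rewrite cyu eqxx.
have pvu : prefix v u by apply: prefix_prefix.
have yS : prefix v (c y).
  exact: (prefix_trans pvu (prefix_trans (prefix_rcons u b) py)).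
have e : m = y by apply/val_inj/anti; rewrite hmin // cym.
by rewrite -rcons_nseq -rcons_cat e.
Qed.

End Final.

End Chips.

Theorem lemma2p1 (k l : nat) (hk : 2 <= k) (hl : 1 <= l)
  (c : config (k ^ l))
  (hreach : reachable k (@root_config (k ^ l)) c)
  (hstab : stable k c)
  (v : vertex) (hv : is_vertex k v) (ht : 1 <= layer v <= l.+1) :
  let S := [set x | in_subtree v (c x)] in
  (exists2 x, x \in S & ((forall y, y \in S -> (x <= y)%N) /\ c x = bottom_left l v)) /\
  (exists2 x, x \in S & ((forall y, y \in S -> (y <= x)%N) /\ c x = bottom_right k l v)).
Proof.
move=> S.
have k0 : 0 < k by apply: ltnW.
have [hva heq hl0 hr0] := inv_reach k0 hreach.
have lv : size v <= l by move: ht; rewrite /layer ltnS => /andP[].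
have fv := fcount_val hk erefl hva heq hstab hv lv.
have [x0 px0] : exists x0, prefix v (c x0).
  case: (pickP (fun x => prefix v (c x))) => [x hx|none]; first by exists x.
  move: fv; rewrite /fcount big1; last by move=> x _; rewrite none.
  by move=> /esym/eqP; rewrite expn_eq0 eqn0Ngt k0.
have inS x : (x \in S) = prefix v (c x) by rewrite inE.
have anL : antisymmetric leq.
  by move=> a b /andP[h1 h2]; apply/eqP; rewrite eqn_leq h1 h2.
have anG : antisymmetric geq.
  by move=> a b /andP[h1 h2]; apply/eqP; rewrite eqn_leq; apply/andP; split.
rewrite /bottom_left /bottom_right /layer subSS.
split.
  case: (@arg_minnP _ x0 (fun x => prefix v (c x)) (fun x : 'I_(k ^ l) => val x) px0) => m pm mm.
  exists m; first by rewrite inS.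
  split; first by move=> y; rewrite inS; apply: mm.
  apply: (descend hk erefl hva heq hstab k0 hl0 anL hv lv pm).
  by move=> y py; apply: mm.
case: (@arg_maxnP _ x0 (fun x => prefix v (c x)) (fun x : 'I_(k ^ l) => val x) px0) => m pm mm.
exists m; first by rewrite inS.
split; first by move=> y; rewrite inS; apply: mm.
have bk : k.-1 < k by rewrite prednK.
apply: (descend hk erefl hva heq hstab bk hr0 anG hv lv pm).
by move=> y py; apply: mm.
Qed.
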